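(* For every abstract storage device $D$, $\sigma(D)\le i(D)\cdot C(D)$.
   Context: An abstract storage device (ASD) is a pair $D=(\mathcal{S}_D,\mathcal{P}_D)$, $\mathcal{S}_D$ a finite set and $\mathcal{P}_D$ a finite family of partitions of $\mathcal{S}_D$. For a partition $\pi$ of $\mathcal{S}'$ and $\phi:\mathcal{S}\to\mathcal{S}'$, $\pi\circ\phi$ is the partition of $\mathcal{S}$ with $x,y$ in the same block iff $\phi(x),\phi(y)$ are in the same block of $\pi$; $\pi\preceq\rho$ means every block of $\pi$ lies in a block of $\rho$; $\wedge$ is the meet of partitions. $D\le D'$ means there exist $\phi:\mathcal{S}_D\to\mathcal{S}_{D'}$, $\alpha:\mathcal{P}_D\to\mathcal{P}_{D'}$ with $\alpha(\pi)\circ\phi\preceq\pi$ for all $\pi\in\mathcal{P}_D$; $D\equiv D'$ means $D\le D'$ and $D'\le D$. $C_m$ is the ASD with state space $\{1,\dots,m\}$ and partition set $\{\{\{1\},\dots,\{m\}\}\}$. Storage capacity: $C(D)=\max\{\log m: C_m\le D\}$ (log base 2). State complexity: $\sigma(D)=\min_{E\equiv D}\log|\mathcal{S}_E|$. $D$ is perfect if $\{\{s\}:s\in\mathcal{S}_D\}\in\mathcal{P}_D$; $D^{(k)}$ has state space $\mathcal{S}_D$ and partition set $\{\pi_1\wedge\cdots\wedge\pi_k:\pi_i\in\mathcal{P}_D\}$; the perfectness index $i(D)$ is the least $k\ge1$ with $D^{(k)}$ perfect, or $\infty$ if none exists. *)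

(* Defs.v *)
From HB Require Import structures.
From mathcomp Require Import all_boot all_order all_algebra.
From mathcomp Require Import boolp reals ereal exp.
Set Implicit Arguments. Unset Strict Implicit. Unset Printing Implicit Defensive.
Import Order.TTheory GRing.Theory Num.Theory.

Record ASD := MkASD {
  states : finType;
  parts : {set {set {set states}}};
  parts_partition : forall pi, pi \in parts -> partition pi [set: states]
}.

Definition pullback (S S' : finType) (phi : S -> S') (pi : {set {set S'}})
  : {set {set S}} :=
  [set phi @^-1: B | B : {set S'} in pi & phi @^-1: B != set0].

Definition refines (S : finType) (pi rho : {set {set S}}) : bool :=
  [forall B in pi, [exists C in rho, B \subset C]].

Definition pmeet (S : finType) (pi rho : {set {set S}}) : {set {set S}} :=
  [set B :&: C | B : {set S} in pi, C : {set S} in rho & B :&: C != set0].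

Definition raw_le (S S' : finType) (P : {set {set {set S}}})
  (P' : {set {set {set S'}}}) : Prop :=
  exists (phi : S -> S') (alpha : {set {set S}} -> {set {set S'}}),
    forall pi, pi \in P -> alpha pi \in P' /\ refines (pullback phi (alpha pi)) pi.

Definition asd_le (D D' : ASD) : Prop := raw_le (parts D) (parts D').
Definition asd_equiv (D D' : ASD) : Prop := asd_le D D' /\ asd_le D' D.

Definition discrete (S : finType) : {set {set S}} := [set [set s] | s : S].

(* C_m: state space {1..m} (here 'I_m), single partition into singletons. *)
Definition Cm_parts (m : nat) : {set {set {set 'I_m}}} := [set discrete 'I_m].

Definition Cm_le (m : nat) (D : ASD) : Prop := raw_le (Cm_parts m) (parts D).

(* m is the maximal m >= 1 with C_m <= D, so that C(D) = log2 m. *)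
Definition is_capacity_max (D : ASD) (m : nat) : Prop :=
  (0 < m)%N /\ Cm_le m D /\ (forall m', (0 < m')%N -> Cm_le m' D -> (m' <= m)%N).

Section Reals.
Variable R : realType.

Definition log2 (x : R) : R := ln x / ln 2.

(* (n+1)-fold meets: kmeets P n = {pi_1 /\ ... /\ pi_{n+1} : pi_i in P} *)
Fixpoint kmeets (S : finType) (P : {set {set {set S}}}) (n : nat)
  : {set {set {set S}}} :=
  match n with
  | 0 => P
  | n'.+1 => [set pmeet pi rho | pi : {set {set S}} in kmeets P n', rho : {set {set S}} in P]
  end.

Definition kperfect (D : ASD) (k : nat) : bool :=
  (0 < k)%N && (discrete (states D) \in kmeets (parts D) k.-1).

Definition perf_index (D : ASD) : \bar R :=
  match pselect (exists k, kperfect D k) with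
  | left h => ((ex_minn h)%:R)%:E
  | right _ => +oo%E
  end.

Definition equiv_card (D : ASD) : pred nat :=
  fun n => `[< exists E : ASD, asd_equiv E D /\ #|states E| = n >].

Definition state_complexity (D : ASD) : R :=
  match pselect (exists n, equiv_card D n) with
  | left h => log2 (ex_minn h)%:R
  | right _ => 0 (* never happens: D is equivalent to itself *)
  end.

End Reals.

(* Main.v *)
Require Import Defs.
From HB Require Import structures.
From mathcomp Require Import all_boot all_order all_algebra.
From mathcomp Require Import boolp reals ereal exp.
Set Implicit Arguments. Unset Strict Implicit. Unset Printing Implicit Defensive.
Import Order.TTheory GRing.Theory Num.Theory.

Lemma card_pmeet (S : finType) (pi rho : {set {set S}}) :
  (#|pmeet pi rho| <= #|pi| * #|rho|)%N.
Proof.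
rewrite -cardsX.
apply: (leq_trans _ (leq_imset_card (fun p : {set S} * {set S} => p.1 :&: p.2) _)).
apply: subset_leq_card; apply/subsetP => X /imset2P [B C HB].
rewrite inE => /andP [HC _] ->.
by apply/imsetP; exists (B, C) => //; rewrite inE /= HB HC.
Qed.

Lemma card_kmeets (S : finType) (P : {set {set {set S}}}) m n pi :
  (forall rho, rho \in P -> #|rho| <= m)%N ->
  pi \in kmeets P n -> (#|pi| <= m ^ n.+1)%N.
Proof.
move=> Hm; elim: n pi => [|n IH] pi /=; first by rewrite expn1; apply: Hm.
move=> /imset2P [a b Ha Hb ->].
apply: (leq_trans (card_pmeet _ _)); rewrite expnS mulnC.
by apply: leq_mul; [apply: Hm | apply: IH].
Qed.

Lemma card_discrete (S : finType) : #|discrete S| = #|S|.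
Proof. by rewrite card_imset //; move=> x y /set1_inj. Qed.

Lemma part_le_cap (D : ASD) m pi : is_capacity_max D m -> pi \in parts D ->
  (#|pi| <= m)%N.
Proof.
move=> [m0 [_ Hmax]] Hpi.
have Hp := parts_partition Hpi.
move: Hp => /and3P [/eqP Hcov Htriv H0].
case: (posnP #|pi|) => [->//|Hn].
apply: Hmax => //.
have [s0 _] : exists s0 : states D, true.
  have [B HB] : exists B, B \in pi by apply/card_gt0P.
  have nz : B != set0 by apply: contraNneq H0 => <-.
  by case/set0Pn: nz => x _; exists x.
pose phi := fun i : 'I_#|pi| => odflt s0 [pick x in enum_val i].
exists phi, (fun _ => pi) => rho; rewrite inE => /eqP ->; split => //.
apply/forallP => X; apply/implyP => /imsetP [B HB ->].

move: HB; rewrite inE => /andP [HB /set0Pn [i Hi]].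
apply/existsP; exists [set i]; rewrite /discrete imset_f //=.
apply/subsetP => j Hj; rewrite inE.
have key : forall k, phi k \in B -> enum_val k = B.
  move=> k Hk.
  have Ek : enum_val k \in pi := enum_valP k.
  have nz : enum_val k != set0 by apply: contraNneq H0 => <-.
  have Hr : phi k \in enum_val k.
    rewrite /phi; case: pickP => [x //|H]; case/set0Pn: nz => x Hx.
    by have := H x; rewrite Hx.
  by rewrite -(def_pblock Htriv Ek Hr) (def_pblock Htriv HB Hk).
rewrite !inE in Hi Hj.
by apply/eqP/enum_val_inj; rewrite (key _ Hi) (key _ Hj).
Qed.

Lemma equiv_refl (D : ASD) : asd_equiv D D.
Proof.
have H : asd_le D D.
  exists id, id => pi Hpi; split => //.
  apply/forallP => X; apply/implyP => /imsetP [B]; rewrite inE => /andP [HB _] ->.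
  apply/existsP; exists B; rewrite HB /=; apply/subsetP => x; by rewrite inE.
by split.
Qed.

Local Open Scope ring_scope.
Lemma sc_le (R : realType) (D : ASD) n : (0 < n)%N -> equiv_card D n ->
  (state_complexity R D <= log2 (n%:R : R))%R.
Proof.
move=> Hn HE; rewrite /state_complexity; case: pselect => [h|[]]; last by exists n.
case: ex_minnP => k _ Hmin.
have Hkn := Hmin n HE.
rewrite /log2 ler_pM2r; last by rewrite invr_gt0 ln_gt0 // ltr1n.
case: (posnP k) => [->|Hk].
  apply: (@le_trans _ _ 0); first by apply: ln_le0; rewrite ler01.
  by apply: ln_ge0; rewrite ler1n.
by rewrite ler_ln ?ler_nat // posrE ltr0n.
Qed.

Definition unit_parts (D : ASD) : {set {set {set unit}}} :=
  if parts D == set0 then set0 else [set [set setT]].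

Lemma unit_parts_partition D pi : pi \in unit_parts D -> partition pi [set: unit].
Proof.
rewrite /unit_parts; case: ifP => _; first by rewrite inE.
rewrite inE => /eqP ->; apply/and3P; split.
- by rewrite cover1.
- exact: trivIset1.
- rewrite inE eq_sym; apply/set0Pn; by exists tt.
Qed.

Definition unitD (D : ASD) : ASD := @MkASD unit (unit_parts D) (@unit_parts_partition D).

Lemma unitD_equiv (D : ASD) (s0 : states D) :
  (forall pi, pi \in parts D -> #|pi| <= 1)%N -> asd_equiv (unitD D) D.
Proof.
move=> H1; split.
- exists (fun _ => s0), (fun _ => odflt set0 [pick p in parts D]) => pi.
  rewrite /= /unit_parts; case: ifPn => [_|Hne]; first by rewrite inE.
  rewrite inE => /eqP ->; split.
    case: pickP => [p //|Hp]; case/set0Pn: Hne => p Hp'; by have := Hp p; rewrite Hp'.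
  apply/forallP => X; apply/implyP => _; apply/existsP; exists setT.
  by rewrite inE eqxx subsetT.
- exists (fun _ => tt), (fun _ => [set setT]) => pi Hpi; split.
    rewrite /= /unit_parts; case: ifPn => [/eqP E|_]; last by rewrite inE.
    by rewrite E inE in Hpi.
  have [/eqP Hcov _ _] := and3P (parts_partition Hpi).
  have : s0 \in cover pi by rewrite Hcov inE.
  move=> /bigcupP [C HC sC].
  apply/forallP => X; apply/implyP => _; apply/existsP; exists C.
  rewrite HC /=; apply/subsetP => x _.
  have : x \in cover pi by rewrite Hcov inE.
  move=> /bigcupP [C' HC' xC'].
  by have := card_le1_eqP (H1 _ Hpi) C C' HC HC' => <-.
Qed.

Theorem proposition5 (R : realType) (D : ASD) (m : nat) :
  is_capacity_max D m ->
  ((state_complexity R D)%:E <= perf_index R D * (log2 (m%:R : R))%:E)%E.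
Proof.
move=> Hcap.
have Hpart := part_le_cap Hcap.
have [m0 [[phi0 [alpha0 _]] _]] := Hcap.
pose s0 := phi0 (Ordinal m0).
rewrite /perf_index; case: pselect => [h|hn].
- case: ex_minnP => k /andP [k0 Hk] _.
  rewrite -EFinM lee_fin.
  have HS : (#|states D| <= m ^ k)%N.
    rewrite -card_discrete -(prednK k0).
    exact: card_kmeets Hpart Hk.
  have Sp : (0 < #|states D|)%N by apply/card_gt0P; exists s0.
  apply: (le_trans (sc_le R Sp _)); first by apply/asboolP; exists D; split => //; exact: equiv_refl.
  rewrite /log2 mulrA ler_pM2r; last by rewrite invr_gt0 ln_gt0 // ltr1n.
  rewrite mulr_natl -lnXn ?ltr0n // -natrX.
  rewrite ler_ln ?ler_nat // posrE ltr0n // expn_gt0; by apply/orP; left.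
- case: (ltngtP m 1) => [|Hm|Hm].
  + by rewrite ltnS leqn0 => /eqP E; move: (m0); rewrite E.
  + rewrite gt0_mulye ?leey // lte_fin /log2 divr_gt0 // ln_gt0 // ?ltr1n //.
  + rewrite Hm /log2 ln1 mul0r mule0 lee_fin.
    have H1 : forall pi, pi \in parts D -> (#|pi| <= 1)%N by move=> pi /Hpart; rewrite Hm.
    apply: (le_trans (sc_le R (n:=1) _ _)) => //.
      apply/asboolP; exists (unitD D); split; first exact: unitD_equiv s0 H1.
      by rewrite card_unit.
    by rewrite /log2 ln1 mul0r.
Qed.
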